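(* Let $B$ be a Banach algebra such that $\bigcap_{\varphi\in\Delta(B)}\ker\varphi=\{0\}$, let $A$ be a Banach subalgebra of $B$, and let $D:A\to B$ be a bounded linear operator. Then the following are equivalent: (i) $D$ is a derivation, i.e. $D(ab)=a\,D(b)+D(a)\,b$ for all $a,b\in A$; (ii) for every $\varphi\in\Delta(B)$, the functional $\varphi\circ D$ is a $(\varphi,\iota)$-point derivation on $A$, where $\iota:A\to B$ is the inclusion map; that is, $\varphi(D(ab))=\varphi(a)\,\varphi(D(b))+\varphi(b)\,\varphi(D(a))$ for all $a,b\in A$.
   Context: $\Delta(B)$ denotes the set of all nonzero multiplicative linear functionals on $B$. The paper calls $B$ semisimple when $\bigcap_{\varphi\in\Delta(B)}\ker\varphi=\{0\}$ (this is the sense used here). For $\varphi\in\Delta(B)$ and a continuous homomorphism $\psi:A\to B$, a bounded linear functional $T$ on $A$ is a $(\varphi,\psi)$-point derivation if $T(ab)=\varphi(\psi(a))T(b)+\varphi(\psi(b))T(a)$ for all $a,b\in A$. *)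

(* Defs.v *)
From HB Require Import structures.
From mathcomp Require Import all_boot all_order all_algebra.
From mathcomp Require Import complex.
From mathcomp Require Import all_classical all_reals all_analysis.
Set Implicit Arguments. Unset Strict Implicit. Unset Printing Implicit Defensive.
Import Order.TTheory GRing.Theory Num.Theory ComplexField.
Import numFieldNormedType.Exports.
Local Open Scope classical_set_scope.
Local Open Scope ring_scope.

Definition banach_algebra_mul (R : realType) (B : completeNormedModType R[i])
    (mul : B -> B -> B) : Prop :=
  [/\ (forall x y z, mul x (mul y z) = mul (mul x y) z),
      (forall x y z, mul (x + y) z = mul x z + mul y z),
      (forall x y z, mul x (y + z) = mul x y + mul x z),
      (forall (c : R[i]) x y, mul (c *: x) y = c *: mul x y
                              /\ mul x (c *: y) = c *: mul x y) &
      (forall x y, `|mul x y| <= `|x| * `|y|)].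

Definition banach_subalgebra (R : realType) (B : completeNormedModType R[i])
    (mul : B -> B -> B) (A : set B) : Prop :=
  [/\ A 0,
      (forall (c : R[i]) x y, A x -> A y -> A (c *: x + y)),
      (forall x y, A x -> A y -> A (mul x y)) &
      closed A].

(* Delta(B): nonzero multiplicative linear functionals on B
   (no continuity assumed, as in the paper). *)
Definition character (R : realType) (B : completeNormedModType R[i])
    (mul : B -> B -> B) (phi : B -> R[i]) : Prop :=
  [/\ (forall (c : R[i]) x y, phi (c *: x + y) = c * phi x + phi y),
      (forall x y, phi (mul x y) = phi x * phi y) &
      exists x, phi x != 0].

Definition char_semisimple (R : realType) (B : completeNormedModType R[i])
    (mul : B -> B -> B) : Prop :=
  forall x : B, (forall phi, character mul phi -> phi x = 0) -> x = 0.

Definition bounded_linear_on (R : realType) (V W : normedModType R[i])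
    (A : set V) (T : V -> W) : Prop :=
  (forall (c : R[i]) x y, A x -> A y -> T (c *: x + y) = c *: T x + T y) /\
  (exists M : R[i], forall x, A x -> `|T x| <= M * `|x|).

Definition point_derivation (R : realType) (B : completeNormedModType R[i])
    (mul : B -> B -> B) (A : set B) (phi : B -> R[i]) (psi : B -> B)
    (T : B -> R[i]) : Prop :=
  bounded_linear_on (A : set B) (T : B -> R[i]^o) /\
  (forall a b, A a -> A b ->
     T (mul a b) = phi (psi a) * T b + phi (psi b) * T a).

Definition derivation_on (R : realType) (B : completeNormedModType R[i])
    (mul : B -> B -> B) (A : set B) (D : B -> B) : Prop :=
  forall a b, A a -> A b -> D (mul a b) = mul a (D b) + mul (D a) b.

(* Main.v *)
Set Warnings "-all".
Require Import Defs.
From HB Require Import structures.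
From mathcomp Require Import all_boot all_order all_algebra.
From mathcomp Require Import complex.
From mathcomp Require Import all_classical all_reals all_analysis.
From mathcomp Require Import ring lra.
Import Order.TTheory GRing.Theory Num.Theory ComplexField.
Import numFieldNormedType.Exports.
Local Open Scope classical_set_scope.
Local Open Scope ring_scope.
Lemma ReC (R : realType) (z : R[i]) : 0 <= z -> (complex.Re z)%:C%C = z.
Proof. by move=> z0; apply: RRe_real; exact: ger0_real. Qed.

Lemma geom_cvg {R : realType} {V : completeNormedModType R[i]} {u : V ^nat} {r c : R} :
  0 <= r -> r < 1 -> (forall n, `|u n.+1 - u n| <= (c * r ^+ n)%:C%C) ->
  cvgn u.
Proof.
move=> r0 r1 H.
have c0 : 0 <= c.
  have := le_trans (normr_ge0 _) (H 0%N); by rewrite expr0 mulr1 ler0c.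
have r1' : 1 - r != 0 by rewrite subr_eq0 eq_sym lt_eqF.
have step : forall n m, `|u (n + m)%N - u n| <= (c * r ^+ n * (1 - r ^+ m) / (1 - r))%:C%C.
  move=> n; elim=> [|m IH].
    by rewrite addn0 subrr normr0 expr0 subrr mulr0 mul0r.
  apply: le_trans (ler_distD (u (n + m)%N) _ _) _.
  rewrite addnS.
  apply: le_trans (lerD (H _) IH) _.
  rewrite -rmorphD /= lecR le_eqVlt; apply/orP; left; apply/eqP.
  rewrite exprD exprS; field; exact: r1'.
have bound : forall n m, `|u (n + m)%N - u n| <= (c / (1 - r) * r ^+ n)%:C%C.
  move=> n m; apply: le_trans (step n m) _; rewrite lecR.
  have -> : c * r ^+ n * (1 - r ^+ m) / (1 - r) = (c / (1 - r) * r ^+ n) * (1 - r ^+ m).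
    by field.
  apply: ler_piMr.
    by rewrite mulr_ge0 ?exprn_ge0 // mulr_ge0 // invr_ge0 subr_ge0 ltW.
  by rewrite gerBl exprn_ge0.
apply/cauchy_cvgP/cauchyP => eps eps0.
have eR : 0 < complex.Re eps by rewrite -ltcR ReC ?ltW.
have cv : (fun n => c / (1 - r) * r ^+ n) @ \oo --> (c / (1 - r)) * 0.
  apply: cvgMl_tmp; apply: cvg_expr; by rewrite ger0_norm.
rewrite mulr0 in cv.
move/cvgrPdist_lt: cv => /(_ _ eR) [N _ HN].
exists (u N); exists N => // n /= Nn.
rewrite -ball_normE /ball_ /= -(subnKC Nn) distrC.
apply: le_lt_trans (bound _ _) _.
rewrite -(@ReC _ _ (ltW eps0)) ltcR.
have := HN N (leqnn N); rewrite sub0r normrN; apply: le_lt_trans.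
exact: ler_norm.
Qed.

Lemma char_lin {R : realType} {B : completeNormedModType R[i]} {phi : B -> R[i]} :
  (forall (c : R[i]) x y, phi (c *: x + y) = c * phi x + phi y) ->
  [/\ phi 0 = 0, (forall x y, phi (x + y) = phi x + phi y),
      (forall c x, phi (c *: x) = c * phi x) &
      (forall x y, phi (x - y) = phi x - phi y)].
Proof.
move=> H.
have p0 : phi 0 = 0.
  have := H 1 0 0; rewrite scaler0 addr0 mul1r => E.
  by have := congr1 (fun z => z - phi 0) E; rewrite addrK subrr => <-.
have pD : forall x y, phi (x + y) = phi x + phi y.
  by move=> x y; rewrite -[x in LHS]scale1r H mul1r.
have pZ : forall c x, phi (c *: x) = c * phi x.
  by move=> c x; rewrite -[_ *: _]addr0 H p0 addr0.
split => // x y; by rewrite pD -scaleN1r pZ mulN1r.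
Qed.

Lemma mul_lin {R : realType} {B : completeNormedModType R[i]} {mul : B -> B -> B} :
  banach_algebra_mul mul ->
  (forall y, mul y 0 = 0) /\ (forall y a b, mul y (a - b) = mul y a - mul y b).
Proof.
case=> _ _ Hr _ _.
have m0 : forall y, mul y 0 = 0.
  move=> y; have := Hr y 0 0; rewrite addr0 => E.
  by have := congr1 (fun z => z - mul y 0) E; rewrite addrK subrr => <-.
split => // y a b; apply/eqP; rewrite eq_sym subr_eq -Hr addrNK //.
Qed.

Lemma char_bound {R : realType} {B : completeNormedModType R[i]} {mul : B -> B -> B}
   {phi : B -> R[i]} : banach_algebra_mul mul -> character mul phi ->
   forall x, `|phi x| <= `|x|.
Proof.
move=> HB [Hl Hm _] x.
have [p0 pD pZ pB] := char_lin Hl.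
have [m0 mB] := mul_lin HB.
case: HB => _ _ _ _ Hn.
case: (boolP (`|phi x| <= `|x|)) => // hn; exfalso.
have lt : `|x| < `|phi x| by rewrite real_ltNge ?normr_real.
have px0 : phi x != 0 by rewrite -normr_gt0; apply: le_lt_trans lt.
pose y := (phi x)^-1 *: x.
have py : phi y = 1 by rewrite pZ mulVf.
have ny : `|y| < 1.
  by rewrite normrZ normfV mulrC ltr_pdivrMr ?normr_gt0 // mul1r.
pose f := fun s => y + mul y s.
pose u := fun n => iter n f 0.
pose r := complex.Re `|y|.
have hr : r%:C%C = `|y| by rewrite ReC.
have r0 : 0 <= r by rewrite -ler0c hr.
have r1 : r < 1 by move: ny; rewrite ltcE => /andP[_].
have Hd : forall n, `|u n.+1 - u n| <= (r * r ^+ n)%:C%C.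
  elim=> [|n IH].
    by rewrite /u /= /f m0 !addr0 subr0 expr0 mulr1 hr.
  have -> : u n.+2 - u n.+1 = mul y (u n.+1 - u n).
    by rewrite mB /u /= /f opprD addrACA subrr add0r.
  apply: le_trans (Hn _ _) _.
  rewrite exprS rmorphM /= hr ler_wpM2l //.
have cu := geom_cvg r0 r1 Hd.
set s := limn u in cu.
have Hs1 : (fun n => u n.+1) @ \oo --> s by rewrite cvg_shiftS.
have Hs2 : (fun n => u n.+1) @ \oo --> y + mul y s.
  apply/cvgrPdist_lt => eps eps0.
  move/cvgrPdist_lt: cu => /(_ _ eps0); apply: filterS => n hn2.
  rewrite /u /= -/(u n) /f opprD addrACA subrr add0r -mB.
  apply: le_lt_trans (Hn _ _) _.
  apply: le_lt_trans hn2; apply: ler_piMl => //; exact: ltW.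
have fs : s = y + mul y s by apply: (cvg_unique _ Hs1 Hs2).
have := congr1 phi fs; rewrite pD Hm py mul1r => E.
have := congr1 (fun z => z - phi s) E; rewrite subrr addrK => /eqP.
by rewrite eq_sym oner_eq0.
Qed.

Theorem theorem2p9 (R : realType) (B : completeNormedModType R[i])
    (mul : B -> B -> B) (A : set B) (D : B -> B) :
  banach_algebra_mul mul ->
  char_semisimple mul ->
  banach_subalgebra mul A ->
  bounded_linear_on A D ->
  derivation_on mul A D <->
  (forall phi : B -> R[i], character mul phi ->
     point_derivation mul A phi id (phi \o D)).
Proof.
move=> HB Hss HA [DL [M HM]]; split.
- move=> Hder phi Hphi.
  have Hb := char_bound HB Hphi.
  case: Hphi => Hl Hm _.
  have [p0 pD pZ pB] := char_lin Hl.
  split; first split.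
  + by move=> c x y Ax Ay /=; rewrite DL // Hl.
  + exists M => x Ax /=; exact: le_trans (Hb _) (HM _ Ax).
  + move=> a b Aa Ab /=; rewrite Hder // pD !Hm.
    by rewrite [phi (D a) * _]mulrC addrC.
- move=> Hpd a b Aa Ab.
  apply/eqP; rewrite -subr_eq0; apply/eqP; apply: Hss => phi Hphi.
  have [p0 pD pZ pB] := char_lin (let: And3 h _ _ := Hphi in h).
  have [_ Hm _] := Hphi.
  have [_ /= E] := Hpd phi Hphi.
  rewrite pB E // pD !Hm.
  by rewrite [phi (D a) * _]mulrC addrC addNr.
Qed.
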